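(* Let $\mathcal{A}=(Q,\delta,s)$ be an NFA over a finite alphabet $\Sigma$ and let $B$ be any bisimulation on $\mathcal{A}^{-1}$. Then the partition $\mathcal{P}_B$ is forward-stable on $\mathcal{A}$.
   Context: An NFA is $\mathcal{A}=(Q,\delta,s)$ with $\delta:Q\times\Sigma\to2^Q$; write $\delta_a(u)=\delta(u,a)$, $\delta_a(T)=\bigcup_{u\in T}\delta_a(u)$ and $\delta_a^{-1}(u)=\{v:u\in\delta_a(v)\}$. $\mathcal{A}^{-1}=(Q,\delta^{-1},s)$ is the NFA with $\delta^{-1}(u,a)=\delta^{-1}_a(u)$ (all transitions reversed). A bisimulation on an NFA $(Q,\gamma,s)$ is a relation $B\subseteq Q\times Q$ such that for all $(u,v)\in B$ and $a\in\Sigma$: if $u'\in\gamma_a(u)$ then there is $v'\in\gamma_a(v)$ with $(u',v')\in B$, and if $v'\in\gamma_a(v)$ then there is $u'\in\gamma_a(u)$ with $(u',v')\in B$. $\mathcal{P}_B$ is the partition of $Q$ into the weakly connected components of the directed graph $(Q,B)$. A partition $\mathcal{P}$ of $Q$ is forward-stable on $\mathcal{A}$ if for any parts $S,T\in\mathcal{P}$ and every $a\in\Sigma$, $S\subseteq\delta_a(T)$ or $S\cap\delta_a(T)=\emptyset$. *)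

(* Defs.v *)
From mathcomp Require Import all_boot.
Set Implicit Arguments. Unset Strict Implicit. Unset Printing Implicit Defensive.

Record NFA (Sigma : finType) := mkNFA {
  state : finType;
  delta : state -> Sigma -> {set state};
  start : state }.

Definition delta_set (Sigma : finType) (A : NFA Sigma) (a : Sigma)
  (T : {set state A}) : {set state A} :=
  \bigcup_(u in T) delta u a.

Definition delta_inv (Sigma : finType) (A : NFA Sigma) (u : state A) (a : Sigma)
  : {set state A} := [set v | u \in delta v a].

Definition inv_NFA (Sigma : finType) (A : NFA Sigma) : NFA Sigma :=
  @mkNFA Sigma (state A) (@delta_inv Sigma A) (start A).

Definition is_bisimulation (Sigma : finType) (A : NFA Sigma)
  (B : rel (state A)) : Prop :=
  forall u v, B u v -> forall a : Sigma,
    (forall u', u' \in delta u a -> exists2 v', v' \in delta v a & B u' v') /\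
    (forall v', v' \in delta v a -> exists2 u', u' \in delta u a & B u' v').

(* P_B : partition of Q into weakly connected components of the digraph (Q, B) *)
Definition partition_of_rel (Q : finType) (B : rel Q) : {set {set Q}} :=
  equivalence_partition (connect (fun u v => B u v || B v u)) [set: Q].

Definition forward_stable (Sigma : finType) (A : NFA Sigma)
  (P : {set {set state A}}) : Prop :=
  forall S T, S \in P -> T \in P -> forall a : Sigma,
    S \subset delta_set a T \/ S :&: delta_set a T = set0.

Arguments is_bisimulation {Sigma} A B.
Arguments forward_stable {Sigma} A P.

(* Main.v *)
Require Import Defs.
From mathcomp Require Import all_boot.

Theorem lemma20 (Sigma : finType) (A : NFA Sigma) (B : rel (state A)) :
  is_bisimulation (inv_NFA A) B ->
  forward_stable A (partition_of_rel B).
Proof.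
move=> bis.
set e := fun u v => B u v || B v u.
have esym : symmetric e by move=> x y; rewrite /e orbC.
have csym := sym_connect_sym esym.
have key : forall x a, closed e (delta_set a [set y in [set: state A] | connect e x y]).
  move=> x a; apply: (intro_closed csym) => u v euv.
  move=> /bigcupP[t]; rewrite !inE /= => Ht ut.
  have Hinv : t \in delta_inv u a by rewrite inE.
  case/orP: euv => Buv.
  - have [H1 _] := bis u v Buv a.
    have [t' t'in Btt'] := H1 t Hinv.
    apply/bigcupP; exists t'.
      rewrite !inE /=; apply: connect_trans Ht _; apply: connect1; by rewrite /e Btt'.
    by move: t'in; rewrite inE.
  - have [_ H2] := bis v u Buv a.
    have [t' t'in Btt'] := H2 t Hinv.
    apply/bigcupP; exists t'.
      rewrite !inE /=; apply: connect_trans Ht _; apply: connect1; by rewrite /e Btt' orbT.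
    by move: t'in; rewrite inE.
move=> S T /imsetP[x _ ->] /imsetP[y _ ->] a.
case: (boolP [exists z, (z \in [set z in [set: state A] | connect e x z]) && (z \in delta_set a [set z in [set: state A] | connect e y z])]).
- case/existsP=> z /andP[]; rewrite !inE /= => xz zin.
  left; apply/subsetP=> w; rewrite !inE /= => xw.
  rewrite -(closed_connect (key y a) (y:=w) (x:=z)) //.
  by apply: connect_trans _ xw; rewrite csym.
- move=> /existsPn H; right; apply/setP=> w; rewrite inE in_set0.
  by have := H w; move/negbTE.
Qed.
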